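(* Let $\iota:\mathcal{Q}\to\mathcal{P}$ be an aligned grid inclusion with $\mathcal{P},\mathcal{Q}$ finite and $\uparrow\iota(\mathcal{Q})=\mathcal{P}$. The functor $\mathrm{Lan}_\iota:\operatorname{rep}\mathcal{Q}\to\operatorname{rep}\mathcal{P}$, $N\mapsto N\circ\lfloor-\rfloor_\iota$, has a left adjoint $\mathrm{C}:\operatorname{rep}\mathcal{P}\to\operatorname{rep}\mathcal{Q}$, and for all $A,B\subseteq\mathcal{P}$ such that every $b\in B$ satisfies $a\le b$ for some $a\in A$, \[ \mathrm{C}\big(\mathbb{k}_{\uparrow A\setminus\uparrow B}\big)\cong\mathbb{k}_{\uparrow\lfloor A\rfloor_\iota\setminus\uparrow\lfloor B\rfloor_\iota}. \] In particular $\mathrm{C}$ maps spread-decomposable representations to spread-decomposable representations.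
   Context: Fix a field $\mathbb{k}$. Grid poset: finite product of total orders with product order. Aligned grid inclusion: a product $\iota_1\times\cdots\times\iota_n$ of injective order-preserving maps of total orders. $\uparrow X=\{p:\exists x\in X, x\le p\}$; $\lfloor p\rfloor_\iota:=\bigvee\{q\in\mathcal{Q}:\iota(q)\le p\}$ and $\lfloor X\rfloor_\iota=\{\lfloor x\rfloor_\iota:x\in X\}$. For a finite poset, $\operatorname{rep}$ denotes functors to finite-dimensional $\mathbb{k}$-vector spaces. $\mathbb{k}_S$ is the indicator representation of a convex set $S$. A spread is a nonempty convex zigzag-connected subset; spread-decomposable means isomorphic to a finite direct sum of spread representations. *)

(* Defs.v *)
From HB Require Import structures.
From mathcomp Require Import all_boot all_order all_algebra.
Set Implicit Arguments. Unset Strict Implicit. Unset Printing Implicit Defensive.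
Import GRing.Theory.
Local Open Scope ring_scope.

(* ---------- Representations of a finite poset (T, le) over a field F ----------
   A representation is given by a finite dimension at every point and, for
   every pair p <= q, the matrix of the structure map V_p -> V_q
   (MathComp row-vector convention: v |-> v *m rmap p q, so composition
   p -> q -> r is rmap p q *m rmap q r).  Maps at incomparable pairs are
   irrelevant (never inspected). *)

Record repd (F : fieldType) (T : finType) := RepD {
  rdim : T -> nat;
  rmap : forall p q : T, 'M[F]_(rdim p, rdim q) }.

Definition is_rep (F : fieldType) (T : finType) (le : rel T) (M : repd F T) :=
  (forall p, rmap M p p = 1%:M) /\
  (forall p q r, le p q -> le q r -> rmap M p r = rmap M p q *m rmap M q r).

Definition is_hom (F : fieldType) (T : finType) (le : rel T) (M N : repd F T)
  (f : forall p, 'M[F]_(rdim M p, rdim N p)) :=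
  forall p q, le p q -> rmap M p q *m f q = f p *m rmap N p q.

Definition rep_iso (F : fieldType) (T : finType) (le : rel T) (M N : repd F T) :=
  exists (f : forall p, 'M[F]_(rdim M p, rdim N p))
         (g : forall p, 'M[F]_(rdim N p, rdim M p)),
    [/\ is_hom le f, is_hom le g,
        forall p, f p *m g p = 1%:M & forall p, g p *m f p = 1%:M].

(* indicator representation k_S: k at points of S, 0 elsewhere, identities
   between points of S (const_mx 1 is the 1x1 identity when both points are
   in S, and an empty matrix otherwise). *)
Definition krep (F : fieldType) (T : finType) (S : {set T}) : repd F T :=
  @RepD F T (fun p => nat_of_bool (p \in S)) (fun p q => const_mx 1).

Definition rep0 (F : fieldType) (T : finType) : repd F T :=
  @RepD F T (fun _ => 0%N) (fun p q => 0).

Definition rep_dsum (F : fieldType) (T : finType) (M N : repd F T) : repd F T :=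
  @RepD F T (fun p => (rdim M p + rdim N p)%N)
    (fun p q => block_mx (rmap M p q) 0 0 (rmap N p q)).

Definition rep_bigsum (F : fieldType) (T : finType) (s : seq (repd F T)) :=
  foldr (@rep_dsum F T) (rep0 F T) s.

Definition convex (T : finType) (le : rel T) (S : {set T}) :=
  forall a b c, a \in S -> c \in S -> le a b -> le b c -> b \in S.

Definition zigzag_connected (T : finType) (le : rel T) (S : {set T}) :=
  forall x y, x \in S -> y \in S ->
    connect (fun u v => [&& u \in S, v \in S & le u v || le v u]) x y.

Definition spread (T : finType) (le : rel T) (S : {set T}) :=
  [/\ S != set0, convex le S & zigzag_connected le S].

Definition spread_decomposable (F : fieldType) (T : finType) (le : rel T)
  (M : repd F T) :=
  exists ss : seq {set T}, (forall X, X \in ss -> spread le X) /\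
    rep_iso le M (rep_bigsum [seq krep F X | X <- ss]).

Definition upset (T : finType) (le : rel T) (X : {set T}) : {set T} :=
  [set p | [exists x in X, le x p]].

Definition is_join (T : finType) (le : rel T) (S : pred T) (x : T) :=
  (forall q, S q -> le q x) /\ (forall y, (forall q, S q -> le q y) -> le x y).

Definition gpt (n : nat) (m : 'I_n -> nat) := {dffun forall i : 'I_n, 'I_(m i)}.

Definition gle (n : nat) (m : 'I_n -> nat) : rel (gpt m) :=
  fun p q => [forall i, (p i <= q i)%N].

Definition gincl (n : nat) (mQ mP : 'I_n -> nat)
  (iota : forall i, 'I_(mQ i) -> 'I_(mP i)) (q : gpt mQ) : gpt mP :=
  [ffun i => iota i (q i)].

Definition aligned_grid_inclusion (n : nat) (mQ mP : 'I_n -> nat)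
  (iota : forall i, 'I_(mQ i) -> 'I_(mP i)) :=
  forall i, injective (iota i) /\
            (forall a b : 'I_(mQ i), (a <= b)%N -> (iota i a <= iota i b)%N).

Definition is_floor (n : nat) (mQ mP : 'I_n -> nat)
  (iota : forall i, 'I_(mQ i) -> 'I_(mP i)) (fl : gpt mP -> gpt mQ) :=
  forall p, is_join (@gle n mQ) (fun q => gle (gincl iota q) p) (fl p).

Definition Lan (F : fieldType) (TQ TP : finType) (fl : TP -> TQ)
  (N : repd F TQ) : repd F TP :=
  @RepD F TP (fun p => rdim N (fl p)) (fun p q => rmap N (fl p) (fl q)).

(* C (on objects) together with a unit eta : M -> Lan (C M) is a left adjoint
   of Lan: (C M, eta M) is a universal arrow from M to Lan, for every M. *)
Definition left_adjoint_of_Lan (F : fieldType) (TQ TP : finType)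
  (leQ : rel TQ) (leP : rel TP) (fl : TP -> TQ)
  (C : repd F TP -> repd F TQ)
  (eta : forall M : repd F TP, forall p, 'M[F]_(rdim M p, rdim (C M) (fl p))) :=
  forall M, is_rep leP M ->
    [/\ is_rep leQ (C M),
        @is_hom F TP leP M (Lan fl (C M)) (eta M) &
        forall N, is_rep leQ N ->
        forall f : forall p, 'M[F]_(rdim M p, rdim N (fl p)),
          @is_hom F TP leP M (Lan fl N) f ->
          exists g : forall q, 'M[F]_(rdim (C M) q, rdim N q),
            [/\ is_hom leQ g,
                forall p, eta M p *m g (fl p) = f p &
                forall g' : forall q, 'M[F]_(rdim (C M) q, rdim N q),
                  is_hom leQ g' -> (forall p, eta M p *m g' (fl p) = f p) ->
                  forall q, g' q = g q]].

(* Main.v *)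
Require Import Defs.
From HB Require Import structures.
From mathcomp Require Import all_boot all_order all_algebra.
Set Implicit Arguments. Unset Strict Implicit. Unset Printing Implicit Defensive.
Module PA.
Import GRing.Theory.
Local Open Scope ring_scope.

Section Generic.
Variables (F : fieldType) (T : finType) (le : rel T).

Lemma mx_row0 m n (A B : 'M[F]_(m,n)) : m = 0%N -> A = B.
Proof. by move=> m0; apply/matrixP => -[i hi]; exfalso; move: hi; rewrite m0. Qed.
Lemma mx_col0 m n (A B : 'M[F]_(m,n)) : n = 0%N -> A = B.
Proof. by move=> n0; apply/matrixP => i [j hj]; exfalso; move: hj; rewrite n0. Qed.

Lemma const_mul m n k : (const_mx 1 : 'M[F]_(m,n)) *m (const_mx 1 : 'M[F]_(n,k)) = const_mx (n%:R).
Proof.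
apply/matrixP=> i j; rewrite !mxE; under eq_bigr do rewrite !mxE mulr1.
by rewrite sumr_const card_ord.
Qed.

Lemma const_eq (b1 b2 : bool) (x y : F) : (b1 -> b2 -> x = y) ->
  (const_mx x : 'M[F]_(b1, b2)) = const_mx y.
Proof.
case: b1 => [|_]; last exact: mx_row0.
case: b2 => [->//|_]; exact: mx_col0.
Qed.

Lemma const_one (k : nat) (x : F) : (k <= 1)%N -> (k = 1%N -> x = 1) ->
  (const_mx x : 'M[F]_k) = 1%:M.
Proof.
case: k => [_ _|[|//] _ hx]; first exact: mx_row0.
by apply/matrixP=> i j; rewrite !mxE !ord1 eqxx hx.
Qed.

Lemma iso_refl (M : repd F T) : rep_iso le M M.
Proof.
exists (fun p => 1%:M), (fun p => 1%:M); split=> //.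
- by move=> p q _; rewrite mulmx1 mul1mx.
- by move=> p q _; rewrite mulmx1 mul1mx.
- by move=> p; rewrite mulmx1.
- by move=> p; rewrite mulmx1.
Qed.

Lemma iso_sym (M N : repd F T) : rep_iso le M N -> rep_iso le N M.
Proof. by move=> [f [g [hf hg fg gf]]]; exists g, f. Qed.

Lemma iso_trans (M N R : repd F T) : rep_iso le M N -> rep_iso le N R -> rep_iso le M R.
Proof.
move=> [f [g [hf hg fg gf]]] [f' [g' [hf' hg' fg' gf']]].
exists (fun p => f p *m f' p), (fun p => g' p *m g p); split.
- by move=> p q lpq; rewrite mulmxA (hf _ _ lpq) -mulmxA (hf' _ _ lpq) mulmxA.
- by move=> p q lpq; rewrite mulmxA (hg' _ _ lpq) -mulmxA (hg _ _ lpq) mulmxA.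
- by move=> p; rewrite mulmxA -(mulmxA (f p)) fg' mulmx1 fg.
- by move=> p; rewrite mulmxA -(mulmxA (g' p)) gf mulmx1 gf'.
Qed.

Lemma iso_dsum (M M' N N' : repd F T) : rep_iso le M M' -> rep_iso le N N' ->
  rep_iso le (rep_dsum M N) (rep_dsum M' N').
Proof.
move=> [f [g [hf hg fg gf]]] [f' [g' [hf' hg' fg' gf']]].
exists (fun p => block_mx (f p) 0 0 (f' p)), (fun p => block_mx (g p) 0 0 (g' p)); split.
- move=> p q lpq /=; rewrite !mulmx_block !mulmx0 !mul0mx !addr0 !add0r.
  by rewrite (hf _ _ lpq) (hf' _ _ lpq).
- move=> p q lpq /=; rewrite !mulmx_block !mulmx0 !mul0mx !addr0 !add0r.
  by rewrite (hg _ _ lpq) (hg' _ _ lpq).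
- by move=> p; rewrite !mulmx_block !mulmx0 !mul0mx !addr0 !add0r fg fg' -scalar_mx_block.
- by move=> p; rewrite !mulmx_block !mulmx0 !mul0mx !addr0 !add0r gf gf' -scalar_mx_block.
Qed.

Lemma cast_l m n k (e : n = k) (A : 'M[F]_(m,n)) :
  A *m castmx (erefl, e) 1%:M = castmx (erefl, e) A.
Proof. by case: k / e; rewrite !castmx_id mulmx1. Qed.
Lemma cast_r m k n (e : m = k) (B : 'M[F]_(m,n)) :
  castmx (e, erefl) 1%:M *m B = castmx (e, erefl) B.
Proof. by case: k / e; rewrite !castmx_id mul1mx. Qed.
Lemma cast_m n n' m k (e1 : n = n') (e2 : m = k) (A : 'M[F]_(n, m)) :
  castmx (erefl, e1) 1%:M *m castmx (e1, e2) A = castmx (erefl, e2) A.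
Proof. by case: n' / e1; case: k / e2; rewrite !castmx_id mul1mx. Qed.
Lemma cast_m2 n n' m k (e1 : n = n') (e2 : m = k) (A : 'M[F]_(n, m)) :
  castmx (e1, e2) A *m castmx (e2, erefl) 1%:M = castmx (e1, erefl) A.
Proof. by case: n' / e1; case: k / e2; rewrite !castmx_id mulmx1. Qed.
Lemma cast_11 n k (e : n = k) :
  castmx (erefl, e) (1%:M : 'M[F]_n) *m castmx (e, erefl) 1%:M = 1%:M.
Proof. by case: k / e; rewrite !castmx_id mulmx1. Qed.
Lemma cast_11' n k (e : n = k) :
  castmx (e, erefl) (1%:M : 'M[F]_n) *m castmx (erefl, e) 1%:M = 1%:M.
Proof. by case: k / e; rewrite !castmx_id mulmx1. Qed.

Lemma iso_cast (M N : repd F T) (e : forall p, rdim M p = rdim N p) :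
  (forall p q, rmap N p q = castmx (e p, e q) (rmap M p q)) -> rep_iso le M N.
Proof.
move=> hN.
exists (fun p => castmx (erefl, e p) 1%:M), (fun p => castmx (e p, erefl) 1%:M); split.
- by move=> p q _; rewrite cast_l hN cast_m.
- by move=> p q _; rewrite hN cast_m2 cast_r.
- by move=> p; rewrite cast_11.
- by move=> p; rewrite cast_11'.
Qed.

Lemma iso_assoc (A B C : repd F T) :
  rep_iso le (rep_dsum (rep_dsum A B) C) (rep_dsum A (rep_dsum B C)).
Proof.
apply: (@iso_cast (rep_dsum (rep_dsum A B) C) (rep_dsum A (rep_dsum B C)) (fun p => esym (addnA (rdim A p) (rdim B p) (rdim C p)))).
move=> p q /=.
have := block_mxA (A11:=rmap A p q) (A12:=0) (A13:=0) (A21:=0) (A22:=rmap B p q) (A23:=0) (A31:=0) (A32:=0) (A33:=rmap C p q).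
rewrite /= !row_mx0 !col_mx0 => ->; exact: eq_castmx.
Qed.

Lemma iso_zero (Z R : repd F T) : (forall p, rdim Z p = 0%N) ->
  rep_iso le (rep_dsum Z R) R.
Proof.
move=> hZ.
exists (fun p => col_mx 0 1%:M), (fun p => row_mx 0 1%:M); split.
- move=> p q _ /=; rewrite mul_block_col mul_col_mx !mulmx0 !mul0mx !addr0 !add0r.
  by congr col_mx; rewrite mulmx1 mul1mx.
- move=> p q _ /=; rewrite mul_row_block !mulmx0 !mul0mx !addr0 !add0r.
  by rewrite mul_mx_row mulmx0; congr row_mx; rewrite mulmx1 mul1mx.
- by move=> p; rewrite mul_col_row !mulmx0 !mul0mx mul1mx scalar_mx_block;
    congr block_mx; apply: mx_row0.
- by move=> p; rewrite mul_row_col mulmx0 add0r mulmx1.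
Qed.

Lemma bigsum_cat (s1 s2 : seq (repd F T)) :
  rep_iso le (rep_dsum (rep_bigsum s1) (rep_bigsum s2)) (rep_bigsum (s1 ++ s2)).
Proof.
elim: s1 => [|M s1 IH] /=; first exact: iso_zero.
apply: iso_trans (iso_assoc _ _ _) _.
exact: iso_dsum (iso_refl _) IH.
Qed.

Definition kpred (P : pred T) : repd F T :=
  @RepD F T (fun p => nat_of_bool (P p)) (fun p q => const_mx 1).

Lemma kpred_eq (P P' : pred T) : P =1 P' -> rep_iso le (kpred P) (kpred P').
Proof.
move=> hP.
exists (fun p => const_mx 1), (fun p => const_mx 1); split.
- move=> p q _ /=; rewrite !const_mul; apply: const_eq => Hp Hq.
  by rewrite -(hP p) Hp (hP q) Hq.
- move=> p q _ /=; rewrite !const_mul; apply: const_eq => Hp Hq.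
  by rewrite -(hP q) Hq (hP p) Hp.
- move=> p /=; rewrite const_mul; apply: const_one; first by case: (P p).
  by rewrite -(hP p); case: (P p).
- move=> p /=; rewrite const_mul; apply: const_one; first by case: (P' p).
  by rewrite (hP p); case: (P' p).
Qed.

Lemma kpred_split (Y K L : pred T) :
  (forall p, Y p = K p || L p) -> (forall p, ~~ (K p && L p)) ->
  (forall p q, le p q -> K p -> L q -> False) ->
  (forall p q, le p q -> L p -> K q -> False) ->
  rep_iso le (kpred Y) (rep_dsum (kpred K) (kpred L)).
Proof.
move=> hY hd hKL hLK.
exists (fun p => const_mx 1), (fun p => const_mx 1); split.
- move=> p q lpq /=; rewrite const_mul.
  rewrite -[X in X *m _]row_mx_const mul_row_block !mulmx0 addr0 add0r !const_mul.
  rewrite -row_mx_const; congr row_mx; apply: const_eq => Yp Xq.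
  + have -> : Y q by rewrite hY Xq.
    rewrite hY in Yp; case/orP: Yp => [->//|Lp].
    by case: (hLK _ _ lpq Lp Xq).
  + have -> : Y q by rewrite hY Xq orbT.
    rewrite hY in Yp; case/orP: Yp => [Kp|->//].
    by case: (hKL _ _ lpq Kp Xq).
- move=> p q lpq /=; rewrite const_mul.
  rewrite -[X in _ *m X]col_mx_const mul_block_col !mul0mx addr0 add0r !const_mul.
  rewrite -col_mx_const; congr col_mx; apply: const_eq => Xp Yq.
  + have -> : Y p by rewrite hY Xp.
    rewrite hY in Yq; case/orP: Yq => [->//|Lq].
    by case: (hKL _ _ lpq Xp Lq).
  + have -> : Y p by rewrite hY Xp orbT.
    rewrite hY in Yq; case/orP: Yq => [Kq|->//].
    by case: (hLK _ _ lpq Xp Kq).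
- move=> p /=; rewrite const_mul; apply: const_one; first by case: (Y p).
  by rewrite hY; have := hd p; case: (K p); case: (L p).
- move=> p /=; rewrite const_mul; apply: const_one.
  + by have := hd p; case: (K p); case: (L p).
  + by rewrite hY; case: (K p); case: (L p).
Qed.

Lemma kpred_rep (P : pred T) :
  (forall a b c, P a -> P c -> le a b -> le b c -> P b) -> is_rep le (kpred P).
Proof.
move=> hc; split=> [p|p q r lpq lqr] /=.
  by apply: const_one; case: (P p).
rewrite const_mul; apply: const_eq => Pp Pr; by rewrite (hc p q r).
Qed.

End Generic.

End PA.
Import PA.

Module PC.
Import GRing.Theory.
Local Open Scope ring_scope.

Lemma connect_conv (T : finType) (e e' : rel T) (S : pred T) :
  (forall u v, e u v -> S u -> e' u v /\ S v) ->
  forall u v, connect e u v -> S u -> connect e' u v.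
Proof.
move=> h u v /connectP [p hp ->] {v}.
elim: p u hp => [|w p IH] u /=; first by move=> _ _; exact: connect0.
move=> /andP [euw hp] Su; have [e'uw Sw] := h _ _ euw Su.
exact: connect_trans (connect1 e'uw) (IH _ hp Sw).
Qed.

Lemma connect_in (T : finType) (e : rel T) (S : pred T) :
  (forall u v, e u v -> S u -> S v) ->
  forall u v, connect e u v -> S u -> S v.
Proof.
move=> h u v /connectP [p hp ->] {v}.
elim: p u hp => [|w p IH] u //= /andP [euw hp] Su.
exact: IH _ hp (h _ _ euw Su).
Qed.

Section Decomp.
Variables (F : fieldType) (T : finType) (le : rel T).

Lemma iso_dim0 (M N : repd F T) : (forall p, rdim M p = 0%N) -> (forall p, rdim N p = 0%N) ->
  rep_iso le M N.
Proof.
move=> hM hN; exists (fun p => 0), (fun p => 0); split.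
- by move=> p q _; apply: mx_row0.
- by move=> p q _; apply: mx_row0.
- by move=> p; apply: mx_row0.
- by move=> p; apply: mx_row0.
Qed.

Lemma decomp (Y : {set T}) : convex le Y ->
  exists ks : seq {set T}, (forall X, X \in ks -> spread le X) /\
    rep_iso le (krep F Y) (rep_bigsum [seq krep F X | X <- ks]).
Proof.
move: {2}#|Y|.+1 (ltnSn #|Y|) => k; elim: k Y => // k IH Y hk hconv.
have [->|[y yY]] := set_0Vmem Y.
  exists [::]; split=> //; apply: iso_dim0 => p //=; by rewrite inE.
pose e := fun u v => [&& u \in Y, v \in Y & le u v || le v u].
have esym : symmetric e.
  by move=> u v; rewrite /e andbCA; congr andb; congr andb; rewrite orbC.
pose K := [set z | connect e y z].
pose L := Y :\: K.
have KY z : z \in K -> z \in Y.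
  rewrite inE => hz; apply: (connect_in _ hz yY) => u v /and3P[]//.
have yK : y \in K by rewrite inE connect0.
have Kcl u v : u \in K -> v \in Y -> le u v || le v u -> v \in K.
  move=> hu vY luv; have uY := KY _ hu; rewrite inE in hu; rewrite inE.
  by apply: connect_trans hu (connect1 _); rewrite /e uY vY luv.
have Kconv : convex le K.
  move=> a b c' aK cK lab lbc; apply: (Kcl _ _ aK); last by rewrite lab.
  exact: hconv (KY _ aK) (KY _ cK) lab lbc.
have Lconv : convex le L.
  move=> a b c' /setDP [aY aK] /setDP [cY cK] lab lbc; apply/setDP; split.
    exact: hconv aY cY lab lbc.
  apply/negP => bK; move/negP: aK; apply; apply: (Kcl _ _ bK aY); by rewrite lab orbT.
have Kzig : zigzag_connected le K.
  move=> x z xK zK.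
  have hxz : connect e x z.
    apply: connect_trans _ (_ : connect e y z); last by move: zK; rewrite inE.
    by rewrite (sym_connect_sym esym); move: xK; rewrite inE.
  apply: (connect_conv (S := mem K)) hxz xK => u v /and3P [uY vY luv] uK; split.
    by move: uK => /= uK; rewrite uK (Kcl _ _ uK vY luv) luv.
  by move: uK => /= uK; apply: (Kcl _ _ uK vY luv).
have Ksp : spread le K by split => //; apply/set0Pn; exists y.
have hL : (#|L| < k)%N.
  rewrite -ltnS; apply: leq_trans hk; rewrite ltnS.
  apply: proper_card; apply/properP; split; first exact: subsetDl.
  by exists y => //; rewrite inE yK.
have [ks [hks iks]] := IH L hL Lconv.
exists (K :: ks); split.
  by move=> X; rewrite inE => /orP [/eqP ->|]; [exact: Ksp| exact: hks].
apply: (@iso_trans F T le _ (rep_dsum (krep F K) (krep F L))).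
  apply: (@kpred_split F T le (fun p => p \in Y) (fun p => p \in K) (fun p => p \in L)).
  - move=> p /=; rewrite [p \in L]inE; case: (boolP (p \in K)) => [/KY -> //|_].
    by case: (p \in Y).
  - by move=> p /=; rewrite [p \in L]inE; case: (p \in K).
  - move=> p q lpq /= pK /setDP [qY qK]; move/negP: qK; apply; apply: (Kcl _ _ pK qY).
    by rewrite lpq.
  - move=> p q lpq /= /setDP [pY pK] qK; move/negP: pK; apply; apply: (Kcl _ _ qK pY).
    by rewrite lpq orbT.
exact: iso_dsum (iso_refl _ _) iks.
Qed.
End Decomp.

End PC.
Import PC.

Module PB.
Import GRing.Theory.
Local Open Scope ring_scope.

Section Adj.
Variables (F : fieldType) (TP TQ : finType) (leP : rel TP) (leQ : rel TQ).
Variables (fl : TP -> TQ) (c : TQ -> TP).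
Hypotheses (reflP : reflexive leP) (transP : transitive leP).
Hypotheses (reflQ : reflexive leQ) (transQ : transitive leQ).
Hypothesis G : forall p q, leQ (fl p) q = leP p (c q).

Definition C0 (M : repd F TP) : repd F TQ :=
  @RepD F TQ (fun q => rdim M (c q)) (fun q q' => rmap M (c q) (c q')).
Definition eta0 (M : repd F TP) p : 'M[F]_(rdim M p, rdim (C0 M) (fl p)) :=
  rmap M p (c (fl p)).

Lemma unitP p : leP p (c (fl p)). Proof. by rewrite -G reflQ. Qed.
Lemma counitQ q : leQ (fl (c q)) q. Proof. by rewrite G reflP. Qed.
Lemma fl_mono p p' : leP p p' -> leQ (fl p) (fl p').
Proof. by move=> h; rewrite G; apply: transP h (unitP p'). Qed.
Lemma c_mono q q' : leQ q q' -> leP (c q) (c q').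
Proof. by move=> h; rewrite -G; apply: transQ (counitQ q) h. Qed.

Lemma adj0 : @left_adjoint_of_Lan F _ _ leQ leP fl C0 eta0.
Proof.
move=> M [M1 Mc]; split.
- split=> [q|q q' q'' h1 h2] /=; first exact: M1.
  by apply: Mc; apply: c_mono.
- move=> p p' lpp' /=; rewrite /eta0.
  rewrite -(Mc p p' (c (fl p'))) ?unitP //.
  by rewrite -(Mc p (c (fl p)) (c (fl p'))) ?unitP ?c_mono ?fl_mono.
- move=> N [N1 Nc] f hf.
  exists (fun q => f (c q) *m rmap N (fl (c q)) q); split.
  + move=> q q' lqq' /=; rewrite mulmxA (hf _ _ (c_mono lqq')) /= -!mulmxA.
    rewrite -(Nc _ _ _ (fl_mono (c_mono lqq')) (counitQ q')).
    by rewrite -(Nc _ _ _ (counitQ q) lqq').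
  + move=> p; rewrite /eta0 mulmxA (hf _ _ (unitP p)) /= -mulmxA.
    by rewrite -(Nc _ _ _ (fl_mono (unitP p)) (counitQ (fl p))) N1 mulmx1.
  + move=> g' hg' heta q.
    rewrite -heta /eta0 -mulmxA -(hg' _ _ (counitQ q)) /= mulmxA.
    by rewrite -(Mc _ _ _ (unitP (c q)) (c_mono (counitQ q))) M1 mul1mx.
Qed.

Lemma adj_unique (C1 C2 : repd F TP -> repd F TQ)
  (eta1 : forall M : repd F TP, forall p, 'M[F]_(rdim M p, rdim (C1 M) (fl p)))
  (eta2 : forall M : repd F TP, forall p, 'M[F]_(rdim M p, rdim (C2 M) (fl p))) :
  @left_adjoint_of_Lan F _ _ leQ leP fl C1 eta1 -> @left_adjoint_of_Lan F _ _ leQ leP fl C2 eta2 ->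
  forall M, is_rep leP M -> rep_iso leQ (C1 M) (C2 M).
Proof.
move=> a1 a2 M hM.
have [r1 h1 u1] := a1 M hM; have [r2 h2 u2] := a2 M hM.
have [g [hg eg _]] := u1 _ r2 _ h2.
have [h [hh eh _]] := u2 _ r1 _ h1.
have [k [_ _ uk]] := u1 _ r1 _ h1.
have [k' [_ _ uk']] := u2 _ r2 _ h2.
have homc (X Y Z : repd F TQ) (a : forall q, 'M[F]_(rdim X q, rdim Y q))
    (b : forall q, 'M[F]_(rdim Y q, rdim Z q)) :
    is_hom leQ a -> is_hom leQ b -> is_hom leQ (fun q => a q *m b q).
  by move=> ha hb q q' l; rewrite mulmxA (ha _ _ l) -mulmxA (hb _ _ l) mulmxA.
have hom1 (X : repd F TQ) : is_hom leQ (fun q => (1%:M : 'M[F]_(rdim X q))).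
  by move=> q q' _; rewrite mulmx1 mul1mx.
exists g, h; split=> // q.
- rewrite (uk (fun q => g q *m h q)) ?(uk (fun q => 1%:M)) //.
  + by move=> p; rewrite mulmx1.
  + by apply: homc.
  + by move=> p; rewrite mulmxA eg eh.
- rewrite (uk' (fun q => h q *m g q)) ?(uk' (fun q => 1%:M)) //.
  + by move=> p; rewrite mulmx1.
  + by apply: homc.
  + by move=> p; rewrite mulmxA eh eg.
Qed.

Lemma C0_iso M M' : rep_iso leP M M' -> rep_iso leQ (C0 M) (C0 M').
Proof.
move=> [f [g [hf hg fg gf]]].
exists (fun q => f (c q)), (fun q => g (c q)); split=> //.
- by move=> q q' l; apply: hf; apply: c_mono.
- by move=> q q' l; apply: hg; apply: c_mono.
- by move=> q; apply: fg.
- by move=> q; apply: gf.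
Qed.

Lemma C0_bigsum s : C0 (rep_bigsum s) = rep_bigsum (map C0 s).
Proof. by elim: s => //= M s <-. Qed.

End Adj.

End PB.
Import PB.

Module PD.
Import GRing.Theory.
Local Open Scope ring_scope.

Section Main.
Variables (F : fieldType) (TP TQ : finType) (leP : rel TP) (leQ : rel TQ).
Variables (fl : TP -> TQ) (c : TQ -> TP).
Hypotheses (reflP : reflexive leP) (transP : transitive leP).
Hypotheses (reflQ : reflexive leQ) (transQ : transitive leQ).
Hypothesis G : forall p q, leQ (fl p) q = leP p (c q).

Let adj0' := adj0 (F:=F) reflP transP reflQ transQ G.

Lemma up_c (A : {set TP}) q : (c q \in upset leP A) = (q \in upset leQ (fl @: A)).
Proof.
rewrite /upset !inE; apply/existsP/existsP => [[a /andP [aA la]]|[x /andP [/imsetP [a aA ->] la]]].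
  by exists (fl a); rewrite imset_f //= G.
by exists a; rewrite aA -G.
Qed.

Lemma list_decomp (ss : seq {set TP}) : (forall X, X \in ss -> convex leP X) ->
  exists ks : seq {set TQ}, (forall X, X \in ks -> spread leQ X) /\
    rep_iso leQ (rep_bigsum [seq C0 c (krep F X) | X <- ss])
                (rep_bigsum [seq krep F X | X <- ks]).
Proof.
elim: ss => [|X ss IH] hss.
  by exists [::]; split=> //; apply: iso_refl.
have [|ks2 [hks2 iks2]] := IH.
  by move=> Y hY; apply: hss; rewrite inE hY orbT.
have cX : convex leQ [set q | c q \in X].
  move=> a b d; rewrite !inE => ha hd lab lbd.
  by apply: (hss X (mem_head _ _)) ha hd _ _; apply: (c_mono reflP transQ G).
have [ks1 [hks1 iks1]] := decomp F cX.
exists (ks1 ++ ks2); split.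
  by move=> Y; rewrite mem_cat => /orP [/hks1|/hks2].
rewrite map_cat /=.
apply: iso_trans (bigsum_cat _ _ _).
apply: iso_dsum iks2.
apply: iso_trans iks1.
change (rep_iso leQ (kpred F (fun q => c q \in X)) (kpred F (fun q => q \in [set q | c q \in X]))).
by apply: kpred_eq => q; rewrite inE.
Qed.

Lemma abstract_main :
  (exists (C : repd F TP -> repd F TQ)
          (eta : forall M : repd F TP, forall p, 'M[F]_(rdim M p, rdim (C M) (fl p))),
      @left_adjoint_of_Lan F _ _ leQ leP fl C eta) /\
  (forall (C : repd F TP -> repd F TQ)
          (eta : forall M : repd F TP, forall p, 'M[F]_(rdim M p, rdim (C M) (fl p))),
      @left_adjoint_of_Lan F _ _ leQ leP fl C eta ->
      (forall A B : {set TP},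
          (forall b, b \in B -> exists2 a, a \in A & leP a b) ->
          rep_iso leQ
            (C (krep F (upset leP A :\: upset leP B)))
            (krep F (upset leQ (fl @: A) :\: upset leQ (fl @: B))))
      /\
      (forall M : repd F TP, is_rep leP M ->
          spread_decomposable leP M ->
          spread_decomposable leQ (C M))).
Proof.
split; first by exists (C0 c), (eta0 fl c).
move=> C eta hC; split.
- move=> A B _.
  have hrep : is_rep leP (krep F (upset leP A :\: upset leP B)).
    apply: (@kpred_rep F TP leP (fun p => p \in upset leP A :\: upset leP B)).
    move=> a b d; rewrite !inE => /andP [naB /existsP [x /andP [xA lxa]]] /andP [ndB _] lab lbd.
    apply/andP; split.
      apply/negP => /existsP [y /andP [yB lyb]]; move/negP: ndB; apply.
      by apply/existsP; exists y; rewrite yB (transP lyb lbd).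
    by apply/existsP; exists x; rewrite xA (transP lxa lab).
  apply: iso_trans (adj_unique hC adj0' hrep) _.
  change (rep_iso leQ (kpred F (fun q => c q \in upset leP A :\: upset leP B))
     (kpred F (fun q => q \in upset leQ (fl @: A) :\: upset leQ (fl @: B)))).
  by apply: kpred_eq => q /=; rewrite !in_setD !up_c.
- move=> M hM [ss [hss hiso]].
  have [|ks [hks iks]] := list_decomp (ss := ss).
    by move=> X /hss [].
  exists ks; split => //.
  apply: iso_trans (adj_unique hC adj0' hM) _.
  apply: iso_trans (C0_iso reflP transQ G hiso) _.
  by rewrite C0_bigsum -map_comp.
Qed.
End Main.

End PD.
Import PD.

Lemma gle_refl n (m : 'I_n -> nat) : reflexive (@gle n m).
Proof. by move=> p; apply/forallP. Qed.
Lemma gle_trans n (m : 'I_n -> nat) : transitive (@gle n m).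
Proof.
move=> q p r /forallP h1 /forallP h2; apply/forallP => i; exact: leq_trans (h1 i) (h2 i).
Qed.

Lemma gleP n (m : 'I_n -> nat) (p q : gpt m) : reflect (forall i, (p i <= q i)%N) (@gle n m p q).
Proof. exact: forallP. Qed.
Unset Implicit Arguments.
Section Grid.
Variables (n : nat) (mQ mP : 'I_n -> nat) (iota : forall i, 'I_(mQ i) -> 'I_(mP i)).
Variable fl : gpt mP -> gpt mQ.
Hypothesis Hal : aligned_grid_inclusion iota.
Hypothesis Hup : upset (@gle n mP) [set gincl iota q | q : gpt mQ] = [set: gpt mP].
Hypothesis Hfl : is_floor iota fl.

Lemma iota_le i a b : (iota i a <= iota i b)%N = (a <= b)%N.
Proof.
have [inj mono] := Hal i; apply/idP/idP; last exact: mono.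
move=> h; rewrite leqNgt; apply/negP => hba.
have := mono _ _ (ltnW hba); rewrite leq_eqVlt => /orP [/eqP e|lt].
  by have := inj _ _ (val_inj e) => eba; move: hba; rewrite eba ltnn.
by move: (leq_trans lt h); rewrite ltnn.
Qed.

Definition upd (i : 'I_n) (q : gpt mQ) (y : 'I_(mQ i)) : gpt mQ :=
  finfun (dfwith (fun k => q k) y).

Lemma upd_in i q y : upd i q y i = y.
Proof. by rewrite /upd ffunE dfwith_in. Qed.
Lemma upd_out i q y j : i != j -> upd i q y j = q j.
Proof. by move=> h; rewrite /upd ffunE dfwith_out. Qed.

Lemma fl_le p : gle (gincl iota (fl p)) p.
Proof.
apply/gleP => i; rewrite ffunE.
have : p \in [set: gpt mP] by rewrite inE.
rewrite -Hup inE => /existsP [x /andP [/imsetP [q0 _ ->] h0]].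
case: (@arg_maxnP _ q0 (fun q => gle (gincl iota q) p) (fun q => nat_of_ord (q i)) h0)
  => qs hqs hmax.
have hub : gle (fl p) (upd i (fl p) (qs i)).
  apply: (proj2 (Hfl p)) => q hq; apply/gleP => j.
  case: (eqVneq i j) => [<-|nij]; first by rewrite upd_in; apply: hmax.
  by rewrite upd_out //; move/gleP: (proj1 (Hfl p) q hq); apply.
move/gleP: hub => /(_ i); rewrite upd_in -iota_le => h1.
apply: leq_trans h1 _; by move/gleP: hqs => /(_ i); rewrite ffunE.
Qed.

Lemma coordG p i (y : 'I_(mQ i)) : (y <= fl p i)%N = (iota i y <= p i)%N.
Proof.
apply/idP/idP => h.
  rewrite -iota_le in h; apply: leq_trans h _.
  by move/gleP: (fl_le p) => /(_ i); rewrite ffunE.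
have : gle (upd i (fl p) y) (fl p).
  apply: (proj1 (Hfl p)); apply/gleP => j; rewrite ffunE.
  case: (eqVneq i j) => [<-|nij]; first by rewrite upd_in.
  by rewrite upd_out //; move/gleP: (fl_le p) => /(_ j); rewrite ffunE.
by move/gleP => /(_ i); rewrite upd_in.
Qed.

Definition Pc i (b : 'I_(mQ i)) (x : 'I_(mP i)) :=
  [forall y : 'I_(mQ i), (iota i y <= x)%N ==> (y <= b)%N].
Definition cc i (b : 'I_(mQ i)) : 'I_(mP i) :=
  [arg max_(x > iota i b | Pc i b x) (x : nat)].
Definition cg (q : gpt mQ) : gpt mP := finfun (fun i => cc i (q i)).

Lemma PcP i (b : 'I_(mQ i)) (x : 'I_(mP i)) : reflect (forall y, (iota i y <= x)%N -> (y <= b)%N) (Pc i b x).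
Proof. by apply: (iffP forallP) => h y; [apply/implyP/h|apply/implyP/h]. Qed.

Lemma ccP i (b : 'I_(mQ i)) (x : 'I_(mP i)) : (x <= cc i b)%N = Pc i b x.
Proof.
rewrite /cc; case: arg_maxnP => [|m hm hmax].
  by apply/PcP => y; rewrite iota_le.
apply/idP/idP => [hxm|]; last exact: hmax.
apply/PcP => y hy; move/PcP: hm => /(_ y); apply.
exact: leq_trans hy hxm.
Qed.

Lemma gridG p q : gle (fl p) q = gle p (cg q).
Proof.
apply/gleP/gleP => h i.
  rewrite ffunE ccP; apply/PcP => y hy.
  rewrite -coordG in hy; exact: leq_trans hy (h i).
have := h i; rewrite ffunE ccP => /PcP /(_ (fl p i)); apply.
by rewrite -coordG.
Qed.
End Grid.
Set Implicit Arguments.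

Theorem mainTheorem11 (F : fieldType) (n : nat) (mQ mP : 'I_n -> nat)
  (iota : forall i, 'I_(mQ i) -> 'I_(mP i)) (fl : gpt mP -> gpt mQ) :
  aligned_grid_inclusion iota ->
  upset (@gle n mP) [set gincl iota q | q : gpt mQ] = [set: gpt mP] ->
  is_floor iota fl ->
  (exists (C : repd F (gpt mP) -> repd F (gpt mQ))
          (eta : forall M : repd F (gpt mP), forall p,
                   'M[F]_(rdim M p, rdim (C M) (fl p))),
      @left_adjoint_of_Lan F _ _ (@gle n mQ) (@gle n mP) fl C eta) /\
  (forall (C : repd F (gpt mP) -> repd F (gpt mQ))
          (eta : forall M : repd F (gpt mP), forall p,
                   'M[F]_(rdim M p, rdim (C M) (fl p))),
      @left_adjoint_of_Lan F _ _ (@gle n mQ) (@gle n mP) fl C eta ->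
      (forall A B : {set gpt mP},
          (forall b, b \in B -> exists2 a, a \in A & gle a b) ->
          rep_iso (@gle n mQ)
            (C (krep F (upset (@gle n mP) A :\: upset (@gle n mP) B)))
            (krep F (upset (@gle n mQ) (fl @: A) :\: upset (@gle n mQ) (fl @: B))))
      /\
      (forall M : repd F (gpt mP), is_rep (@gle n mP) M ->
          spread_decomposable (@gle n mP) M ->
          spread_decomposable (@gle n mQ) (C M))).
Proof.
move=> Hal Hup Hfl.
exact: (@abstract_main F _ _ _ _ fl (cg n mQ mP iota) (@gle_refl n mP) (@gle_trans n mP)
  (@gle_refl n mQ) (@gle_trans n mQ) (gridG n mQ mP iota fl Hal Hup Hfl)).
Qed.
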